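(* Let $\mathbb{L}=(\mathcal{P},\mathcal{C},\parallel)$ be a Laguerre plane satisfying axioms (C) and (S). Then $\mathbb{L}$ satisfies the following condition $(\Pi)$: let $a,b,c,x$ be pairwise non-parallel points with $x\notin(a,b,c)^{\circ}$, and let $p,q$ be points such that $p\parallel c$, $p\in(a,b,x)^{\circ}$, $q\parallel b$, $q\in(a,c,x)^{\circ}$; if $K$ is a circle containing $x$ which is tangent to $(a,b,c)^{\circ}$ at $a$, then $K\cap(p,q,x)^{\circ}=\{x\}$.
   Context: A Laguerre plane is a triple $(\mathcal{P},\mathcal{C},\parallel)$ where $\mathcal{P}$ is a set of points, $\mathcal{C}\subset 2^{\mathcal{P}}$ a set of circles and $\parallel$ an equivalence relation on $\mathcal{P}$ (parallelism; its classes are called generators) such that: (1) any three pairwise non-parallel points $a,b,c$ lie on a unique circle, denoted $(a,b,c)^{\circ}$; (2) for every circle $K$ and non-parallel points $p\in K$, $q\notin K$ there is exactly one circle $L$ with $q\in L$ and $K\cap L=\{p\}$; (3) for every point $p$ and circle $K$ there is exactly one point $q\in K$ with $q\parallel p$; (4) some circle contains at least three but not all points. Circles $K,L$ are tangent at $p$ if $K\cap L=\{p\}$ or $K=L$ (with $p\in K$). For $p\in K$, $\langle p,K\rangle$ denotes the set of circles tangent to $K$ at $p$. Axiom (C): for any circles $K,L$ and any point $p\in K\setminus L$ there exists exactly one circle $M\in\langle p,K\rangle$ with $|M\cap L|=1$. Axiom (S): if $K,L,M,N$ are circles and $a,b,c,d$ points with $K\cap L=\{a\}$, $L\cap M=\{b\}$,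 $M\cap N=\{c\}$, $N\cap K=\{d\}$ and $a\nparallel c$, then there is a circle containing $a,b,c,d$. *)

(* Defs.v *)
(* Laguerre planes: points of type P, circles are subsets of P
   (predicates P -> Prop) singled out by the predicate C, parallelism par. *)

Section LaguerreDefs.
Variable P : Type.
Variable C : (P -> Prop) -> Prop.
Variable par : P -> P -> Prop.

Definition meet_only (K L : P -> Prop) (p : P) : Prop :=
  forall z, (K z /\ L z) <-> z = p.

Definition tangent (K L : P -> Prop) (p : P) : Prop :=
  K p /\ (meet_only K L p \/ K = L).

Definition pencil (p : P) (K : P -> Prop) (M : P -> Prop) : Prop :=
  C M /\ tangent K M p.

(* M is "the" circle (a,b,c)° (unique by axiom (1) when a,b,c pairwise non-parallel) *)
Definition circ3 (a b c : P) (M : P -> Prop) : Prop :=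
  C M /\ M a /\ M b /\ M c.

Record laguerre_plane : Prop := {
  par_refl : forall x, par x x;
  par_sym : forall x y, par x y -> par y x;
  par_trans : forall x y z, par x y -> par y z -> par x z;
  lag_ax1 : forall a b c, ~ par a b -> ~ par a c -> ~ par b c ->
      exists K, circ3 a b c K /\ forall K', circ3 a b c K' -> K' = K;
  lag_ax2 : forall K p q, C K -> K p -> ~ K q -> ~ par p q ->
      exists L, (C L /\ L q /\ meet_only K L p) /\
        forall L', (C L' /\ L' q /\ meet_only K L' p) -> L' = L;
  lag_ax3 : forall p K, C K ->
      exists q, (K q /\ par q p) /\ forall q', (K q' /\ par q' p) -> q' = q;
  lag_ax4 : exists K, C K /\
      (exists a b c, a <> b /\ a <> c /\ b <> c /\ K a /\ K b /\ K c) /\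
      (exists z, ~ K z)
}.

Definition meet_one (M L : P -> Prop) : Prop :=
  exists z, (M z /\ L z) /\ forall z', (M z' /\ L z') -> z' = z.

Definition axiom_C : Prop :=
  forall K L p, C K -> C L -> K p -> ~ L p ->
    exists M, (pencil p K M /\ meet_one M L) /\
      forall M', (pencil p K M' /\ meet_one M' L) -> M' = M.

Definition axiom_S : Prop :=
  forall K L M N a b c d, C K -> C L -> C M -> C N ->
    meet_only K L a -> meet_only L M b -> meet_only M N c -> meet_only N K d ->
    ~ par a c ->
    exists Z, C Z /\ Z a /\ Z b /\ Z c /\ Z d.

End LaguerreDefs.

(* Main.v *)
Require Import Defs.
From Stdlib Require Import Classical.

Lemma on_par_eq P C par (L : laguerre_plane P C par) K u v :
  C K -> K u -> K v -> par u v -> u = v.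
Proof.
  intros HK Hu Hv Huv.
  destruct (lag_ax3 _ _ _ L v K HK) as [q [[_ _] Hq]].
  rewrite (Hq u (conj Hu Huv)), (Hq v (conj Hv (par_refl _ _ _ L v))). reflexivity.
Qed.

Lemma circ3_uniq P C par (L : laguerre_plane P C par) a b c K1 K2 :
  ~ par a b -> ~ par a c -> ~ par b c -> circ3 P C a b c K1 -> circ3 P C a b c K2 -> K1 = K2.
Proof.
  intros h1 h2 h3 k1 k2.
  destruct (lag_ax1 _ _ _ L a b c h1 h2 h3) as [K [_ HK]].
  rewrite (HK K1 k1), (HK K2 k2). reflexivity.
Qed.

Lemma mo_sym P (K L : P -> Prop) z : meet_only P K L z -> meet_only P L K z.
Proof. unfold meet_only; intros H w; rewrite <- (H w); tauto. Qed.

Lemma one_only P (M L : P -> Prop) : meet_one P M L -> exists z, meet_only P M L z.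
Proof.
  intros [z [[h1 h2] h3]]. exists z. intro w; split.
  - intro; apply h3; auto.
  - intro; subst; auto.
Qed.

Lemma only_one P (M L : P -> Prop) z : meet_only P M L z -> meet_one P M L.
Proof. intro H. exists z; split. apply H; auto. intros; apply H; auto. Qed.

Lemma lemX P C (HC : axiom_C P C) O K L a y z :
  C O -> C K -> C L -> meet_only P O K a -> ~ L a -> meet_only P O L y ->
  meet_only P K L z -> K = O.
Proof.
  intros HO HK HL HOK nLa HOL HKL.
  assert (Oa : O a) by (apply (proj2 (HOK a)); reflexivity).
  destruct (HC O L a HO HL Oa nLa) as [M [_ HM]].
  assert (K = M).
  { apply HM. split. split; [exact HK | split; [exact Oa | left; exact HOK]].
    exact (only_one _ _ _ _ HKL). }
  assert (O = M).
  { apply HM. split. split; [exact HO | split; [exact Oa | right; reflexivity]].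
    exact (only_one _ _ _ _ HOL). }
  congruence.
Qed.

Theorem theorem2p1 (P : Type) (C : (P -> Prop) -> Prop) (par : P -> P -> Prop) :
  laguerre_plane P C par -> axiom_C P C -> axiom_S P C par ->
  forall (a b c x p q : P) (Kabc Kabx Kacx Kpqx K : P -> Prop),
    ~ par a b -> ~ par a c -> ~ par a x -> ~ par b c -> ~ par b x -> ~ par c x ->
    circ3 P C a b c Kabc -> ~ Kabc x ->
    circ3 P C a b x Kabx -> circ3 P C a c x Kacx ->
    par p c -> Kabx p -> par q b -> Kacx q ->
    circ3 P C p q x Kpqx ->
    C K -> K x -> tangent P Kabc K a ->
    meet_only P K Kpqx x.
Proof.
  intros L HC HS a b c x p q Kabc Kabx Kacx Kpqx K nab nac nax nbc nbx ncx
    Habc nKx Habx Hacx pc Hp qb Hq Hpqx CK Kx Htan.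
  pose proof Habc as [CO [Oa [Ob Oc]]].
  pose proof Habx as [CAB [ABa [ABb ABx]]].
  pose proof Hacx as [CAC [ACa [ACc ACx]]].
  assert (Hmo : meet_only P Kabc K a).
  { destruct Htan as [_ [Hmo | Heq]]; [exact Hmo |].
    exfalso; apply nKx; rewrite Heq; exact Kx. }
  assert (Ka : K a) by (apply (proj2 (Hmo a)); reflexivity).
  assert (refl := par_refl _ _ _ L).
  assert (sym := par_sym _ _ _ L).
  assert (trans := par_trans _ _ _ L).
  assert (nap : ~ par a p) by (intro h; apply nac; exact (trans _ _ _ h pc)).
  assert (nxp : ~ par x p) by (intro h; apply ncx; apply sym; exact (trans _ _ _ h pc)).
  assert (nbp : ~ par b p) by (intro h; apply nbc; exact (trans _ _ _ h pc)).
  assert (npq : ~ par p q).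
  { intro h; apply nbc; apply sym. exact (trans _ _ _ (trans _ _ _ (sym _ _ pc) h) qb). }
  assert (nqx : ~ par q x) by (intro h; apply nbx; exact (trans _ _ _ (sym _ _ qb) h)).
  assert (ncp : c <> p).
  { intro e; subst p. apply nKx.
    assert (Kabx = Kabc) by (apply (circ3_uniq _ _ _ L a b c); auto; repeat split; auto).
    subst; auto. }
  assert (nKp : ~ K p).
  { intro Kp. assert (K = Kabx).
    { apply (circ3_uniq _ _ _ L a x p); auto; repeat split; auto. }
    subst Kabx. assert (b = a) by (apply (Hmo b); auto). subst; apply nab; auto. }
  destruct (lag_ax2 _ _ _ L K x p CK Kx nKp nxp) as [N [[CN [Np HKN]] _]].
  assert (Nx : N x) by (apply (proj2 (HKN x)); reflexivity).
  assert (nNa : ~ N a).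
  { intro h. assert (a = x) by (apply (HKN a); auto). subst; apply nax; auto. }
  assert (nNb : ~ N b).
  { intro h. assert (N = Kabx).
    { apply (circ3_uniq _ _ _ L b x p); auto; repeat split; auto. }
    subst; auto. }
  assert (nNc : ~ N c).
  { intro h. apply ncp. apply (on_par_eq _ _ _ L N); auto. }
  destruct (HC Kabc N b CO CN Ob nNb) as [M' [[[CM' [_ HM']] Hone'] _]].
  destruct (one_only _ _ _ Hone') as [w Hw].
  destruct HM' as [HOM' | Heq].
  2:{ exfalso. subst M'. apply nKx.
      rewrite <- (lemX _ _ HC Kabc K N a w x CO CK CN Hmo nNa Hw HKN). exact Kx. }
  assert (Nw : N w) by (apply (proj2 (Hw w)); reflexivity).
  assert (M'w : M' w) by (apply (proj2 (Hw w)); reflexivity).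
  assert (M'b : M' b) by (apply (proj2 (HOM' b)); reflexivity).
  assert (nM'a : ~ M' a).
  { intro h. assert (a = b) by (apply (HOM' a); auto). subst; apply nab; auto. }
  assert (ABw : Kabx w).
  { destruct (HS Kabc M' N K b w x a CO CM' CN CK HOM' Hw (mo_sym _ _ _ _ HKN)
       (mo_sym _ _ _ _ Hmo) nbx) as [Z [CZ [Zb [Zw [Zx Za]]]]].
    assert (Z = Kabx) by (apply (circ3_uniq _ _ _ L a b x); auto; repeat split; auto).
    subst; auto. }
  assert (wp : w = p).
  { destruct (classic (w = x)) as [wx | wx].
    - exfalso. subst w.
      assert (HKM : meet_only P K M' x).
      { intro y; split.
        - intros [Ky My]. apply NNPP; intro yx.
          assert (nyx : ~ par x y).
          { intro h. apply yx. apply (on_par_eq _ _ _ L K); auto. }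
          assert (nNy : ~ N y).
          { intro h. apply yx. apply (HKN y); auto. }
          destruct (lag_ax2 _ _ _ L N x y CN Nx nNy nyx) as [L' [_ HL']].
          assert (K = L') by (apply HL'; auto using mo_sym).
          assert (M' = L') by (apply HL'; auto using mo_sym).
          assert (b = a) by (apply (Hmo b); split; congruence).
          subst; apply nab; auto.
        - intro e; subst; auto. }
      apply nKx.
      rewrite <- (lemX _ _ HC Kabc K M' a b x CO CK CM' Hmo nM'a HOM' HKM). exact Kx.
    - apply NNPP; intro wp.
      assert (nwx : ~ par w x) by (intro h; apply wx; apply (on_par_eq _ _ _ L N); auto).
      assert (nwp : ~ par w p) by (intro h; apply wp; apply (on_par_eq _ _ _ L N); auto).
      assert (N = Kabx) by (apply (circ3_uniq _ _ _ L w x p); auto; repeat split; auto).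
      subst; auto. }
  subst w.
  destruct (HC Kabc N c CO CN Oc nNc) as [M [[[CM [_ HM]] Hone] _]].
  destruct (one_only _ _ _ Hone) as [z Hz].
  destruct HM as [HOM | Heq].
  2:{ exfalso. subst M. apply nKx.
      rewrite <- (lemX _ _ HC Kabc K N a z x CO CK CN Hmo nNa Hz HKN). exact Kx. }
  assert (Nz : N z) by (apply (proj2 (Hz z)); reflexivity).
  assert (ACz : Kacx z).
  { destruct (HS Kabc M N K c z x a CO CM CN CK HOM Hz (mo_sym _ _ _ _ HKN)
       (mo_sym _ _ _ _ Hmo) ncx) as [Z [CZ [Zc [Zz [Zx Za]]]]].
    assert (Z = Kacx) by (apply (circ3_uniq _ _ _ L a c x); auto; repeat split; auto).
    subst; auto. }
  assert (bz : par b z).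
  { apply NNPP; intro nbz.
    destruct (HS Kabc M' N M b p z c CO CM' CN CM HOM' Hw (mo_sym _ _ _ _ Hz)
       (mo_sym _ _ _ _ HOM) nbz) as [Z [CZ [Zb [Zp [Zz Zc]]]]].
    apply ncp. apply (on_par_eq _ _ _ L Z); auto. }
  assert (zq : z = q).
  { apply (on_par_eq _ _ _ L Kacx); auto. exact (trans _ _ _ (sym _ _ bz) (sym _ _ qb)). }
  subst z.
  assert (Kpqx = N).
  { apply (circ3_uniq _ _ _ L p q x); auto. repeat split; auto. }
  subst; exact HKN.
Qed.
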